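(* There is a constant $c$ such that, as $n\to\infty$, the fraction of Boolean $n\times n$ matrices $A$ for which the size of a smallest cancellation-free linear circuit computing $A$ is at most $c$ times the size of a smallest linear circuit computing $A$ tends to $1$. That is, for almost every matrix the cancellation ratio is bounded by a constant.
   Context: A linear circuit over $\mathbb{F}_2$ with inputs $x_1,\ldots,x_n$ is a directed acyclic graph whose in-degree-0 nodes are the inputs and whose other nodes (gates) have in-degree 2 and compute the XOR of their two children; $n$ nodes are designated as outputs $y_1,\ldots,y_n$, and the circuit computes $A$ if $\mathbf{y}=A\mathbf{x}$ for all $\mathbf{x}\in\mathbb{F}_2^n$. The size is the number of gates. The value vector $\kappa(u)\in\mathbb{F}_2^n$ of a node $u$ has $\kappa(u)_i=1$ iff $x_i$ occurs in the parity computed at $u$. A linear circuit is cancellation-free if whenever there is a directed path from a node $w$ to a node $u$, $\kappa(u)\geq\kappa(w)$ coordinatewise. The cancellation ratio of a matrix is the ratio between the size of a smallest cancellation-free linear circuit computing it and the size of a smallest linear circuit computing it. *)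

(* Defs.v *)
From Stdlib Require Import Relations.
From mathcomp Require Import all_boot all_order all_algebra.
Set Implicit Arguments. Unset Strict Implicit. Unset Printing Implicit Defensive.
Import Order.TTheory GRing.Theory Num.Theory.
Local Open Scope ring_scope.

(* Nodes are numbered by nat: nodes
   0 .. n-1 are the inputs x_1..x_n, node n+k is the k-th gate
   (a topological numbering, which every DAG admits).  Gate k is the pair
   of its two (distinct) children, both of which must be earlier nodes.
   [outs i] is the node designated as output y_(i+1). *)
Record circuit (n : nat) := Circuit {
  gates : seq (nat * nat);
  outs : 'I_n -> nat
}.

Definition wf_circuit n (C : circuit n) : Prop :=
  (forall k, (k < size (gates C))%N ->
     let g := nth (0%N, 0%N) (gates C) k in
     [/\ (g.1 < n + k)%N, (g.2 < n + k)%N & g.1 != g.2]) /\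
  (forall i, (outs C i < n + size (gates C))%N).

Definition csize n (C : circuit n) : nat := size (gates C).

Definition node_vals (V : zmodType) (init : seq V) (gs : seq (nat * nat)) : seq V :=
  foldl (fun vs g => rcons vs (nth 0 vs g.1 + nth 0 vs g.2)) init gs.

Definition eval n (C : circuit n) (x : 'cV['F_2]_n) (u : nat) : 'F_2 :=
  nth 0 (node_vals [seq x i 0 | i <- enum 'I_n] (gates C)) u.

Definition kappa n (C : circuit n) (u : nat) : 'rV['F_2]_n :=
  nth 0 (node_vals [seq delta_mx 0 i | i <- enum 'I_n] (gates C)) u.

Definition computes n (C : circuit n) (A : 'M['F_2]_n) : Prop :=
  wf_circuit C /\
  forall (x : 'cV['F_2]_n) (i : 'I_n), eval C x (outs C i) = (A *m x) i 0.

Definition cedge n (C : circuit n) (w u : nat) : Prop :=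
  exists k, [/\ (k < size (gates C))%N, u = (n + k)%N &
    (w = (nth (0%N, 0%N) (gates C) k).1 \/ w = (nth (0%N, 0%N) (gates C) k).2)].

Definition reaches n (C : circuit n) : relation nat := clos_refl_trans nat (cedge C).

Definition cancellation_free n (C : circuit n) : Prop :=
  forall w u, reaches C w u ->
    forall j : 'I_n, kappa C w 0 j = 1 -> kappa C u 0 j = 1.

Definition ratio_at_most n (c : nat) (A : 'M['F_2]_n) : Prop :=
  exists C : circuit n, [/\ computes C A, cancellation_free C &
    forall D : circuit n, computes D A -> (csize C <= c * csize D)%N].

(* Main.v *)
Require Import Defs.
From mathcomp Require Import all_boot all_order all_algebra.
From mathcomp Require Import zify lra.
From Stdlib Require Import Lia.
Import Order.TTheory GRing.Theory Num.Theory.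
Module PartQ.
Local Open Scope ring_scope.
Set Implicit Arguments. Unset Strict Implicit. Unset Printing Implicit Defensive.

Lemma size_node_vals (V : zmodType) (init : seq V) gs :
  size (node_vals init gs) = (size init + size gs)%N.
Proof.
elim: gs init => [|g gs IH] init /=; first by rewrite addn0.
by rewrite /node_vals /= -/(node_vals _ _) IH size_rcons addSnnS.
Qed.

Lemma nth_map0 (V W : zmodType) (f : V -> W) (s : seq V) i :
  f 0 = 0 -> nth 0 (map f s) i = f (nth 0 s i).
Proof.
move=> f0; case: (ltnP i (size s)) => H; first by rewrite (nth_map 0).
by rewrite !nth_default ?size_map.
Qed.

Lemma node_vals_map (V W : zmodType) (f : V -> W) init gs :
  f 0 = 0 -> (forall a b, f (a + b) = f a + f b) ->
  map f (node_vals init gs) = node_vals (map f init) gs.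
Proof.
move=> f0 fD; elim: gs init => [|g gs IH] init //=.
rewrite /node_vals /= -!/(node_vals _ _) IH map_rcons fD !nth_map0 //.
Qed.

Lemma eval_kappa n (C : circuit n) x u : eval C x u = (kappa C u *m x) 0 0.
Proof.
rewrite /eval /kappa.
set f := fun v : 'rV['F_2]_n => (v *m x) 0 0.
have f0 : f 0 = 0 by rewrite /f mul0mx mxE.
have fD : forall a b, f (a + b) = f a + f b by move=> a b; rewrite /f mulmxDl mxE.
rewrite -[RHS]/(f _) -(nth_map0 _ _ f0) node_vals_map //.
congr (nth _ (node_vals _ _) _); rewrite -[in RHS]map_comp enumT.
apply: eq_map => i /=.
by rewrite /f /= -rowE mxE.
Qed.
Section S.
Variable n : nat.
Implicit Types (T A B : {set 'I_n}) (L : seq {set 'I_n}).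

Definition vecS T : 'rV['F_2]_n := \row_j (j \in T)%:R.

Lemma F2_cases (a : 'F_2) : a = 0 \/ a = 1.
Proof. case: a => [[|[|m]] Hm] //; [left|right]; exact: val_inj. Qed.

Lemma vecS_set1 i : vecS [set i] = delta_mx 0 i.
Proof. by apply/rowP => j; rewrite !mxE in_set1 eq_sym. Qed.

Lemma vecS0 : vecS set0 = 0.
Proof. by apply/rowP => j; rewrite !mxE in_set0. Qed.

Lemma vecSU A B : [disjoint A & B] -> vecS A + vecS B = vecS (A :|: B).
Proof.
move=> dAB; apply/rowP => j; rewrite !mxE in_setU.
case: (boolP (j \in A)) => jA; case: (boolP (j \in B)) => jB //=.
- by move: (disjointFr dAB jA); rewrite jB.
- by rewrite addr0.
- by rewrite add0r.
- by rewrite addr0.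
Qed.

Lemma vecS_entry T j : (vecS T 0 j == 1) = (j \in T).
Proof. by rewrite mxE; case: (j \in T); rewrite ?eqxx // eq_sym oner_eq0. Qed.

Lemma vecS_inj : injective vecS.
Proof.
move=> A B H; apply/setP => j; by rewrite -!vecS_entry H.
Qed.

Fixpoint ext L (ps : seq ({set 'I_n} * {set 'I_n})) :=
  match ps with [::] => L | p :: ps' => ext (rcons L (p.1 :|: p.2)) ps' end.

Fixpoint build L (ps : seq ({set 'I_n} * {set 'I_n})) : seq (nat * nat) :=
  match ps with [::] => [::]
  | p :: ps' => (index p.1 L, index p.2 L) :: build (rcons L (p.1 :|: p.2)) ps' end.

Fixpoint valid L (ps : seq ({set 'I_n} * {set 'I_n})) : Prop :=
  match ps with [::] => True
  | p :: ps' => [/\ p.1 \in L, p.2 \in L, p.1 != p.2, [disjoint p.1 & p.2] &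
                   valid (rcons L (p.1 :|: p.2)) ps'] end.

Lemma ext_prefix L ps : exists t, ext L ps = L ++ t.
Proof.
elim: ps L => [|p ps IH] L /=; first by exists [::]; rewrite cats0.
have [t ->] := IH (rcons L (p.1 :|: p.2)); exists ((p.1 :|: p.2) :: t).
by rewrite -cats1 -catA.
Qed.

Lemma size_ext L ps : size (ext L ps) = (size L + size ps)%N.
Proof.
elim: ps L => [|p ps IH] L /=; first by rewrite addn0.
by rewrite IH size_rcons addSnnS.
Qed.

Lemma size_build L ps : size (build L ps) = size ps.
Proof. by elim: ps L => [|p ps IH] L //=; rewrite IH. Qed.

Lemma mem_ext L ps x : x \in L -> x \in ext L ps.
Proof. by have [t ->] := ext_prefix L ps; rewrite mem_cat => ->. Qed.

Lemma nth_ext L ps i : (i < size L)%N -> nth set0 (ext L ps) i = nth set0 L i.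
Proof. by have [t ->] := ext_prefix L ps; rewrite nth_cat => ->. Qed.

Lemma ext_cat L ps1 ps2 : ext L (ps1 ++ ps2) = ext (ext L ps1) ps2.
Proof. by elim: ps1 L => [|p ps IH] L //=. Qed.

Lemma valid_cat L ps1 ps2 :
  valid L ps1 -> valid (ext L ps1) ps2 -> valid L (ps1 ++ ps2).
Proof.
elim: ps1 L => [|p ps IH] L //= [h1 h2 h3 h4 h5] h6; split => //.
exact: IH.
Qed.

Lemma build_vals L ps :
  valid L ps -> node_vals (map vecS L) (build L ps) = map vecS (ext L ps).
Proof.
elim: ps L => [|p ps IH] L //= [h1 h2 h3 h4 h5].
rewrite /node_vals /= -/(node_vals _ _) -IH //.
rewrite !(nth_map set0) ?index_mem // !nth_index // vecSU // map_rcons //.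
Qed.

Lemma build_gates L ps : valid L ps -> forall k, (k < size ps)%N ->
  let g := nth (0%N, 0%N) (build L ps) k in
  [/\ (g.1 < size L + k)%N, (g.2 < size L + k)%N, g.1 != g.2 &
      nth set0 (ext L ps) (size L + k) =
        nth set0 (ext L ps) g.1 :|: nth set0 (ext L ps) g.2].
Proof.
elim: ps L => [|p ps IH] L //= [h1 h2 h3 h4 h5] [|k] Hk /=.
  rewrite addn0 !index_mem h1 h2; split => //.
    apply: contra h3 => /eqP E; apply/eqP.
    by rewrite -(nth_index set0 h1) E nth_index.
  rewrite !nth_ext ?size_rcons ?ltnS ?index_size //.
  by rewrite -cats1 !nth_cat !index_mem h1 h2 ltnn subnn /= !nth_index.
have [a b c d] := IH _ h5 k Hk.
by rewrite size_rcons addSnnS in a b d *.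
Qed.

End S.

Definition L0 n := [seq [set i] | i <- enum 'I_n].
Definition rowset n (A : 'M['F_2]_n) i := [set j | A i j == 1].

Lemma row_rowset n (A : 'M['F_2]_n) i : vecS (rowset A i) = row i A.
Proof.
apply/rowP => j; rewrite !mxE in_set.
by case: (F2_cases (A i j)) => ->.
Qed.

Lemma circuit_of_sets n (A : 'M['F_2]_n) ps :
  valid (L0 n) ps -> (forall i, rowset A i \in ext (L0 n) ps) ->
  exists C : circuit n, [/\ computes C A, cancellation_free C & csize C = size ps].
Proof.
move=> V R.
set E := ext (L0 n) ps.
pose C := Circuit (build (L0 n) ps) (fun i => index (rowset A i) E).
have Hinit : [seq delta_mx 0 i | i <- enum 'I_n] = map (@vecS n) (L0 n) :> seq 'rV_n.
  by rewrite /L0 -[in RHS]map_comp; apply: eq_map => i /=; rewrite vecS_set1.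
have Hk : forall u, kappa C u = vecS (nth set0 E u).
  move=> u; rewrite /kappa /= Hinit build_vals //.
  case: (ltnP u (size E)) => Hu; first by rewrite (nth_map set0).
  by rewrite !nth_default ?size_map // vecS0.
have sL0 : size (L0 n) = n by rewrite size_map size_enum_ord.
have G := build_gates V; rewrite sL0 in G.
have sub : forall w u, reaches C w u -> nth set0 E w \subset nth set0 E u.
  move=> w u; elim => [w' u' [k [Hk' -> Hw]]| w' | w1 w2 w3 _ H1 _ H2].
  - rewrite /C /= size_build in Hk'; have [_ _ _ ->] := G k Hk'.
    by case: Hw => ->; [apply: subsetUl | apply: subsetUr].
  - exact: subxx.
  - exact: subset_trans H1 H2.
exists C; split; last by rewrite /csize size_build.
- split.
  + split.
    * move=> k; rewrite /C /= size_build => Hk'; have [a b c _] := G k Hk'.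
      by split.
    * move=> i; rewrite /C /= size_build; have := R i; rewrite -index_mem size_ext sL0 //.
  + move=> x i; rewrite eval_kappa Hk nth_index // row_rowset.
    by rewrite -row_mul mxE.
- move=> w u Hwu j; rewrite !Hk => /eqP; rewrite vecS_entry => Hj.
  by apply/eqP; rewrite vecS_entry; apply: (subsetP (sub _ _ Hwu)).
Qed.

End PartQ.
Import PartQ.

Module PartC.
Set Implicit Arguments. Unset Strict Implicit. Unset Printing Implicit Defensive.

Lemma disjU (T : finType) (A B C : {set T}) :
  [disjoint A :|: B & C] = [disjoint A & C] && [disjoint B & C].
Proof. by rewrite -!setI_eq0 setIUl setU_eq0. Qed.

Section Chains.
Variable n : nat.
Implicit Types (T A B X acc s : {set 'I_n}) (L ss : seq {set 'I_n}).
Notation pairs := (seq ({set 'I_n} * {set 'I_n})).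

Fixpoint chain acc (ss : seq {set 'I_n}) : pairs :=
  match ss with [::] => [::] | s :: ss' => (acc, s) :: chain (acc :|: s) ss' end.
Definition chainS (ss : seq {set 'I_n}) : pairs :=
  match ss with [::] => [::] | s :: ss' => chain s ss' end.

Lemma size_chain acc ss : size (chain acc ss) = size ss.
Proof. by elim: ss acc => [|s ss IH] acc //=; rewrite IH. Qed.

Lemma size_chainS ss : size (chainS ss) = (size ss).-1.
Proof. by case: ss => [|s ss] //=; rewrite size_chain. Qed.

Lemma chain_mem L acc ss : acc \in L ->
  acc :|: \bigcup_(s <- ss) s \in ext L (chain acc ss).
Proof.
elim: ss acc L => [|s ss IH] acc L /= H; first by rewrite big_nil setU0.
rewrite big_cons setUA; apply: IH.
by rewrite mem_rcons mem_head.
Qed.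

Lemma chainS_mem L s ss : s \in L ->
  \bigcup_(x <- s :: ss) x \in ext L (chainS (s :: ss)).
Proof. by move=> H; rewrite big_cons /=; apply: chain_mem. Qed.

Lemma chain_valid L acc ss : acc \in L ->
  (forall s, s \in ss -> [/\ s \in L, s != set0 & [disjoint acc & s]]) ->
  pairwise (fun a b : {set 'I_n} => [disjoint a & b]) ss ->
  valid L (chain acc ss).
Proof.
elim: ss acc L => [|s ss IH] acc L //= HA Hs.
move=> /andP[/allP Hall Hpw].
have [h1 h2 h3] := Hs s (mem_head _ _).
split => //=.
- by apply: contra h2 => /eqP E; move: h3; rewrite E -setI_eq0 setIid.
- apply: IH; first by rewrite mem_rcons mem_head.
  + move=> s' Hs'; have [g1 g2 g3] := Hs s' (mem_behead (s := s :: ss) Hs').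
    split => //; first by rewrite mem_rcons in_cons g1 orbT.
    by rewrite disjU g3 Hall.
  + exact: Hpw.
Qed.

Lemma chainS_valid L ss :
  (forall s, s \in ss -> s \in L /\ s != set0) ->
  pairwise (fun a b : {set 'I_n} => [disjoint a & b]) ss ->
  valid L (chainS ss).
Proof.
case: ss => [|s ss] //= Hs => /andP[/allP Hall Hpw].
apply: chain_valid => //; first by case: (Hs s (mem_head _ _)).
move=> s' Hs'; have [g1 g2] := Hs s' (mem_behead (s := s :: ss) Hs'); split => //.
exact: Hall.
Qed.

Lemma valid_flatten (I : Type) (f : I -> pairs) L1 xs :
  (forall x L, {subset L1 <= L} -> valid L (f x)) ->
  forall L, {subset L1 <= L} -> valid L (flatten (map f xs)).
Proof.
move=> Hf; elim: xs => [|x xs IH] L HL //=.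
apply: valid_cat; first exact: Hf.
apply: IH => y Hy; apply: mem_ext; exact: HL.
Qed.

Lemma mem_flatten_ext (I : eqType) (f : I -> pairs) L1 xs x X :
  (forall L, {subset L1 <= L} -> X \in ext L (f x)) -> x \in xs ->
  forall L, {subset L1 <= L} -> X \in ext L (flatten (map f xs)).
Proof.
move=> Hf; elim: xs => [|y xs IH] //= Hx L HL.
rewrite ext_cat; rewrite in_cons in Hx; case/orP: Hx => [/eqP <-|Hx].
  by apply: (@mem_ext n); apply: Hf.
apply: IH => // z Hz; apply: mem_ext; exact: HL.
Qed.

Lemma size_flatten_le (I : eqType) (J : Type) (f : I -> seq J) xs c :
  (forall x, x \in xs -> size (f x) <= c) -> size (flatten (map f xs)) <= size xs * c.
Proof.
elim: xs => [|x xs IH] //= Hf.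
rewrite size_cat mulSn leq_add ?Hf ?mem_head // IH // => y Hy.
by apply: Hf; rewrite in_cons Hy orbT.
Qed.

End Chains.

Section Lupanov.
Variables n k : nat.
Hypothesis k0 : 0 < k.
Notation m := (n %/ k).+1.
Implicit Types (T : {set 'I_n}) (L : seq {set 'I_n}) (e j : 'I_n).

Definition blk (b : 'I_m) : {set 'I_n} := [set j : 'I_n | j %/ k == b].
Definition bl (j : 'I_n) : 'I_m := inord (j %/ k).

Lemma bl_val j : (bl j : nat) = j %/ k.
Proof. by rewrite inordK // ltnS leq_div2r // ltnW. Qed.

Lemma mem_blk j : j \in blk (bl j).
Proof. by rewrite inE bl_val. Qed.

Lemma blk_disj b b' : b != b' -> [disjoint blk b & blk b'].
Proof.
move=> H; rewrite -setI_eq0; apply/eqP/setP => j; rewrite !inE.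
apply/negP => /andP[/eqP h1 /eqP h2]; move: H; rewrite -val_eqE /= -h1 h2 eqxx.
by [].
Qed.

Lemma card_blk b : #|blk b| <= k.
Proof.
pose f := fun j : 'I_n => (Ordinal (ltn_pmod j k0)).
rewrite -(card_in_imset (f := f)); first by rewrite -[k in _ <= k]card_ord max_card.
move=> j1 j2; rewrite !inE => /eqP h1 /eqP h2 /(congr1 val) /= h3.
by apply/val_inj; rewrite /= (divn_eq j1 k) (divn_eq j2 k) h1 h2 h3.
Qed.

Definition allT : seq {set 'I_n} := flatten [seq enum (powerset (blk b)) | b <- enum 'I_m].
Definition ps1 := flatten [seq chainS [seq [set e] | e <- enum T] | T : {set 'I_n} <- allT].

Lemma mem_allT T : (T \in allT) = [exists b, T \subset blk b].
Proof.
apply/flattenP/existsP => [[s /mapP [b _ ->]]|[b Hb]].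
  by rewrite mem_enum powersetE => H; exists b.
by exists (enum (powerset (blk b))); [apply: map_f; rewrite mem_enum | rewrite mem_enum powersetE].
Qed.

Lemma size_allT : size allT <= m * 2 ^ k.
Proof.
rewrite /allT; have := size_flatten_le (f := fun b : 'I_m => enum (powerset (blk b))) (xs := enum 'I_m) (c := 2 ^ k).
rewrite size_enum_ord; apply.
by move=> b _; rewrite -cardE card_powerset leq_pexp2l // card_blk.
Qed.

Lemma L0_sub1 L e : {subset L0 n <= L} -> [set e] \in L.
Proof. by move=> H; apply: H; apply: map_f; rewrite mem_enum. Qed.

Lemma chain1_valid T L : {subset L0 n <= L} -> valid L (chainS [seq [set e] | e <- enum T]).
Proof.
move=> HL; apply: chainS_valid.
  move=> s /mapP [e _ ->]; split; first exact: L0_sub1.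
  by apply/set0Pn; exists e; rewrite set11.
rewrite pairwise_map; have := enum_uniq (mem T); rewrite uniq_pairwise.
apply: sub_pairwise => x y /= H; rewrite disjoints1 in_set1; by apply: contra H => /eqP ->.
Qed.

Lemma ps1_valid : valid (L0 n) ps1.
Proof.
apply: (valid_flatten (L1 := L0 n)) => // T L HL; exact: chain1_valid.
Qed.

Lemma bigcup_set1_enum T : \bigcup_(x <- [seq [set e] | e <- enum T]) x = T.
Proof.
rewrite big_map big_enum /=; apply/setP => j; apply/bigcupP/idP => [[e He]|Hj].
  by rewrite in_set1 => /eqP ->.
by exists j; rewrite ?set11.
Qed.

Lemma ps1_mem T : T \in allT -> T != set0 -> T \in ext (L0 n) ps1.
Proof.
move=> HT /set0Pn [e He].
apply: (mem_flatten_ext (L1 := L0 n) _ HT) => // L HL.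
case E: (enum T) => [|e' es].
  by move: (mem_enum (mem T) e); rewrite E He.
rewrite -E -{1}(bigcup_set1_enum T) E /=; apply: chainS_mem; exact: L0_sub1.
Qed.

Lemma size_ps1 : size ps1 <= m * 2 ^ k * k.
Proof.
rewrite /ps1; apply: leq_trans (size_flatten_le (c := k) _) _.
  move=> T; rewrite size_chainS size_map -cardE mem_allT => /existsP [b Hb].
  apply: leq_trans (leq_pred _) _; apply: leq_trans (card_blk b).
  exact: subset_leq_card.
by rewrite leq_mul2r size_allT orbT.
Qed.


Lemma mem_bigcup_seq (s : seq {set 'I_n}) j :
  (j \in \bigcup_(x <- s) x) = has (fun x : {set 'I_n} => j \in x) s.
Proof.
elim: s => [|x s IH]; first by rewrite big_nil in_set0.
by rewrite big_cons in_setU IH.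
Qed.

Definition parts (A : 'M['F_2]_n) i : seq {set 'I_n} :=
  [seq rowset A i :&: blk b | b <- enum 'I_m & rowset A i :&: blk b != set0].
Definition ps2 A := flatten [seq chainS (parts A i) | i <- enum 'I_n].

Lemma parts_in A i s : s \in parts A i -> s \in allT /\ s != set0.
Proof.
case/mapP => b; rewrite mem_filter => /andP [H _] ->; split => //.
by rewrite mem_allT; apply/existsP; exists b; apply: subsetIr.
Qed.

Lemma ps2_valid A L : {subset ext (L0 n) ps1 <= L} -> valid L (ps2 A).
Proof.
apply: (valid_flatten (L1 := ext (L0 n) ps1)) => i L' HL'.
apply: chainS_valid.
  move=> s Hs; have [h1 h2] := parts_in Hs; split => //.
  by apply: HL'; apply: ps1_mem.
rewrite pairwise_map; apply: pairwise_filter.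
have := enum_uniq (mem 'I_m); rewrite uniq_pairwise.
apply: sub_pairwise => x y /= H.
by apply: (disjointW (subsetIr _ _) (subsetIr _ _)); apply: blk_disj.
Qed.

Lemma rowset_bigcup A i : \bigcup_(s <- parts A i) s = rowset A i.
Proof.
apply/setP => j; rewrite mem_bigcup_seq; apply/hasP/idP.
  by case=> s /mapP [b _ ->]; rewrite inE => /andP[].
move=> Hj; exists (rowset A i :&: blk (bl j)); last by rewrite inE Hj mem_blk.
apply: map_f; rewrite mem_filter mem_enum andbT.
by apply/set0Pn; exists j; rewrite inE Hj mem_blk.
Qed.

Lemma ps2_mem A i L : rowset A i != set0 -> {subset ext (L0 n) ps1 <= L} ->
  rowset A i \in ext L (ps2 A).
Proof.
move=> Hne; apply: (mem_flatten_ext (L1 := ext (L0 n) ps1) (x := i)); last by rewrite mem_enum.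
move=> L' HL'; case E: (parts A i) => [|s ss].
  by move: Hne; rewrite -rowset_bigcup E big_nil eqxx.
rewrite -rowset_bigcup E; apply: chainS_mem; apply: HL'.
have [h1 h2] : s \in allT /\ s != set0 by apply: (@parts_in A i); rewrite E mem_head.
exact: ps1_mem.
Qed.

Lemma size_ps2 A : size (ps2 A) <= n * m.
Proof.
rewrite /ps2; apply: leq_trans (size_flatten_le (c := m) _) _.
  move=> i _; rewrite size_chainS size_map size_filter.
  apply: leq_trans (leq_pred _) _; apply: leq_trans (count_size _ _) _.
  by rewrite size_enum_ord.
by rewrite size_enum_ord.
Qed.

Lemma upper (A : 'M['F_2]_n) : (forall i, rowset A i != set0) ->
  exists C : circuit n, [/\ computes C A, cancellation_free C &
     csize C <= m * 2 ^ k * k + n * m].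
Proof.
move=> Hne.
have V : valid (L0 n) (ps1 ++ ps2 A).
  by apply: valid_cat; [exact: ps1_valid | exact: ps2_valid].
have R : forall i, rowset A i \in ext (L0 n) (ps1 ++ ps2 A).
  by move=> i; rewrite ext_cat; apply: ps2_mem.
have [C [h1 h2 h3]] := circuit_of_sets V R.
by exists C; split => //; rewrite h3 size_cat leq_add // ?size_ps1 ?size_ps2.
Qed.

End Lupanov.

End PartC.
Import PartC.

Module PartL.
Set Implicit Arguments. Unset Strict Implicit. Unset Printing Implicit Defensive.

Section Count.
Variables n s : nat.

Definition Code := ('I_s.+1 * {ffun 'I_s -> 'I_(n+s).+1 * 'I_(n+s).+1} * {ffun 'I_n -> 'I_(n+s).+1})%type.

Definition decode (c : Code) : circuit n :=
  Circuit (take c.1.1 [seq ((c.1.2 i).1 : nat, (c.1.2 i).2 : nat) | i <- enum 'I_s])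
          (fun i => (c.2 i : nat)).

Definition mat_of (C : circuit n) : 'M['F_2]_n := \matrix_(i, j) kappa C (outs C i) ord0 j.

Lemma computes_mat C A : computes C A -> mat_of C = A.
Proof.
case=> _ H; apply/matrixP => i j; rewrite mxE.
have := H (delta_mx j ord0) i; rewrite eval_kappa -!colE !mxE.
by [].
Qed.

Lemma small_image (D : circuit n) A : computes D A -> (csize D <= s)%N ->
  exists c : Code, mat_of (decode c) = A.
Proof.
move=> HD Hs; have [[Wg Wo] _] := HD.
case: D HD Wg Wo Hs => g o HD Wg Wo Hs; rewrite /csize /= in Wg Wo Hs.
pose t : 'I_s.+1 := inord (size g).
pose fg : {ffun 'I_s -> 'I_(n+s).+1 * 'I_(n+s).+1} :=
  [ffun i : 'I_s => (inord (nth (0%N, 0%N) g i).1, inord (nth (0%N,0%N) g i).2)].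
pose fo : {ffun 'I_n -> 'I_(n+s).+1} := [ffun i => inord (o i)].
exists (t, fg, fo).
have Eg : gates (decode (t, fg, fo)) = g.
  rewrite /decode /= /t inordK ?ltnS //.
  have Hsz : size [seq ((fg i).1 : nat, (fg i).2 : nat) | i <- enum 'I_s] = s.
    by rewrite size_map size_enum_ord.
  apply: (@eq_from_nth _ (0%N, 0%N)).
    by rewrite size_takel // Hsz.
  move=> i; rewrite size_takel ?Hsz // => Hi.
  have His : (i < s)%N by apply: leq_trans Hs.
  rewrite nth_take // (nth_map (Ordinal His)) ?size_enum_ord //.
  have -> : nth (Ordinal His) (enum 'I_s) i = Ordinal His.
    by apply: val_inj; rewrite /= nth_enum_ord.
  have [h1 h2 _] := Wg i Hi.
  rewrite /fg ffunE /= !inordK //; first by case: (nth _ g i).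
    by rewrite ltnS; apply: leq_trans (ltnW h2) _; rewrite leq_add2l ltnW.
  by rewrite ltnS; apply: leq_trans (ltnW h1) _; rewrite leq_add2l ltnW.
rewrite -(computes_mat HD); apply/matrixP => i j; rewrite !mxE.
rewrite /kappa Eg /= /fo ffunE inordK //.
by rewrite ltnS; apply: leq_trans (ltnW (Wo i)) _; rewrite leq_add2l.
Qed.

Lemma card_Code : #|{: Code}| = (s.+1 * ((n+s).+1 * (n+s).+1) ^ s * (n+s).+1 ^ n)%N.
Proof. by rewrite !card_prod !card_ffun !card_prod !card_ord. Qed.

End Count.

Section Zero.
Variable n : nat.
Local Open Scope ring_scope.

Definition Zset : {set 'M['F_2]_n} := [set A | [exists i, row i A == 0]].

Definition Emx (i : 'I_n) (v : 'rV['F_2]_n) : 'M['F_2]_n :=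
  \matrix_(r, j) (if r == i then v 0 j else 0).

Lemma card_F2 : #|'F_2| = 2%N.
Proof. by rewrite card_Fp. Qed.

Lemma card_Zset : (#|Zset| * 2 ^ n <= n.+1 * 2 ^ (n * n))%N.
Proof.
pose H := fun Av : 'M['F_2]_n * 'rV['F_2]_n =>
  let p := [pick i | row i Av.1 == 0] in
  (p, match p with Some i => Av.1 + Emx i Av.2 | None => Av.1 end).
have -> : (2 ^ n)%N = #|[set: 'rV['F_2]_n]| by rewrite cardsT card_mx card_F2 mul1n.
rewrite -cardsX -(@card_in_imset _ _ H).
  apply: leq_trans (max_card _) _.
  by rewrite card_prod card_option card_ord card_mx card_F2.
move=> [A v] [A' v']; rewrite !inE /= => /andP [HA _] /andP [HA' _].
rewrite /H /=; case: pickP => [i Hi|]; last by move/existsP: HA => [j /eqP Hj] /(_ j); rewrite Hj eqxx.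
case: pickP => [i' Hi'|]; last by move/existsP: HA' => [j /eqP Hj] /(_ j); rewrite Hj eqxx.
case=> Eii E; subst i'.
have Ev : v = v'.
  apply/rowP => j; move/matrixP: E => /(_ i j); rewrite !mxE eqxx.
  move/eqP: Hi => /matrixP /(_ 0 j); rewrite !mxE => ->.
  move/eqP: Hi' => /matrixP /(_ 0 j); rewrite !mxE => ->.
  by rewrite !add0r.
by move: E; rewrite -Ev => /addIr ->.
Qed.

End Zero.

End PartL.
Import PartL.

Module PartA.
Set Implicit Arguments. Unset Strict Implicit. Unset Printing Implicit Defensive.

Lemma sq_le_pow j : j * j <= 2 ^ j + 9.
Proof.
have H : forall j, 4 <= j -> j * j <= 2 ^ j.
  elim=> [|i IH] // Hj.
  case: (ltngtP i 3) => Hj3; first by lia.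
    have := IH Hj3; rewrite expnS; nia.
  by rewrite Hj3.
case: (leqP 4 j) => Hj; first by have := H j Hj; lia.
by nia.
Qed.

Lemma L_facts n (Hn : 1000 <= n) :
  let L := trunc_log 2 n in
  [/\ 2 ^ L <= n, n < 2 ^ L.+1, L * L <= n + 9 & 2 <= L].
Proof.
move=> L.
have h1 : 2 ^ L <= n by apply: trunc_logP => //; lia.
have h2 : n < 2 ^ L.+1 by apply: trunc_log_ltn.
split => //.
  have := sq_le_pow L; lia.
have : trunc_log 2 4 <= L by apply: leq_trunc_log; lia.
by rewrite (_ : trunc_log 2 4 = 2) //.
Qed.

Lemma upper_arith n L (Hn : 1000 <= n) (h1 : 2 ^ L <= n) (hL : 2 <= L) :
  (n %/ (L %/ 2)).+1 * 2 ^ (L %/ 2) * (L %/ 2) + n * (n %/ (L %/ 2)).+1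
    < 72 * (n * n %/ (8 * L.+1)).+1.
Proof.
set k := L %/ 2; set s := n * n %/ _.
have Lk : L = k * 2 + L %% 2 := divn_eq L 2.
have m2 : L %% 2 < 2 := ltn_pmod L (isT : 0 < 2).
have k1 : 1 <= k by lia.
have P2 : 2 ^ k * 2 ^ k <= n.
  rewrite -expnD; apply: leq_trans h1; rewrite leq_pexp2l //; lia.
have kP : k < 2 ^ k := ltn_expl k (isT : 1 < 2).
have ak : n %/ k * k <= n := leq_trunc_div n k.
have ce : n * n < s.+1 * (8 * L.+1) := ltn_ceil _ (isT : 0 < 8 * L.+1).
have Ln : L < n by apply: leq_trans h1; apply: ltn_expl.
move: P2 kP ak ce; set a := n %/ k; set P := 2 ^ k => P2 kP ak ce.
have kn : k <= n by lia.
have t1 : a.+1 * k <= 2 * n by rewrite mulSn; lia.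
have t2' : L.+1 <= 2 * P by lia.
have t2 : P * L.+1 <= 2 * n.
  apply: leq_trans (leq_mul (leqnn P) t2') _.
  rewrite mulnCA; lia.
have t3 : a.+1 * P * k * L.+1 <= 4 * (n * n).
  have := leq_mul t1 t2.
  have -> : a.+1 * k * (P * L.+1) = a.+1 * P * k * L.+1.
    by rewrite mulnAC -!mulnA (mulnC k).
  lia.
have t4' : L.+1 <= 4 * k by lia.
have t4 : a * L.+1 <= 4 * n.
  apply: leq_trans (leq_mul (leqnn a) t4') _.
  rewrite mulnCA; lia.
have t5 : n * a.+1 * L.+1 <= 5 * (n * n).
  rewrite -mulnA mulSn mulnDr.
  have := leq_mul (leqnn n) t4; have := leq_mul (leqnn n) Ln; nia.
have t6 : (a.+1 * P * k + n * a.+1) * L.+1 < 72 * s.+1 * L.+1.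
  rewrite mulnDl -(mulnA 72) (mulnC 8) in ce *; lia.
by rewrite ltn_pmul2r in t6.
Qed.

Lemma exp_arith n L s (Hn : 1000 <= n) (hL : 2 <= L) (hLL : L * L <= n + 9)
  (hs : s * (8 * L.+1) <= n * n) :
  (2 * L + 4) * (1 + 2 * s + n) + n <= n * n.
Proof.
have hL16 : 16 * L + 36 <= n by nia.
have e1 : (2 * L + 4) * (2 * s) * 4 <= 3 * (n * n) by nia.
have e2 : 4 * ((2 * L + 4) * (1 + n) + n) <= n * n.
  have := leq_mul hL16 (leqnn n); nia.
nia.
Qed.

Lemma code_bound n L (Hn : 1000 <= n) (h2 : n < 2 ^ L.+1) (hL : 2 <= L)
  (hLL : L * L <= n + 9) :
  (n * n %/ (8 * L.+1)).+1 * ((n + n * n %/ (8 * L.+1)).+1 * (n + n * n %/ (8 * L.+1)).+1)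
     ^ (n * n %/ (8 * L.+1)) * (n + n * n %/ (8 * L.+1)).+1 ^ n * 2 ^ n <= 2 ^ (n * n).
Proof.
set s := n * n %/ _.
have hs : s * (8 * L.+1) <= n * n := leq_trunc_div _ _.
clearbody s; set B := (n + s).+1.
have hBdef : B = (n + s).+1 by [].
clearbody B.
have hnn : n * n <= 2 ^ (2 * L + 2).
  have := leq_mul (ltnW h2) (ltnW h2); rewrite -expnD.
  by have -> : L.+1 + L.+1 = 2 * L + 2 by lia.
have hB : B <= 2 ^ (2 * L + 4).
  have -> : 2 ^ (2 * L + 4) = 4 * 2 ^ (2 * L + 2).
    have E : 2 * L + 4 = 2 + (2 * L + 2) by lia.
    by rewrite E expnD.
  rewrite hBdef; nia.
have hsB : s.+1 <= B by rewrite hBdef; lia.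
apply: leq_trans (_ : B ^ (1 + 2 * s + n) * 2 ^ n <= _).
  rewrite leq_mul2r; apply/orP; right.
  rewrite !expnD expn1 expn0 muln1 -expnMn; apply: leq_mul => //; exact: leq_mul.
apply: leq_trans (_ : 2 ^ ((2 * L + 4) * (1 + 2 * s + n)) * 2 ^ n <= _).
  by rewrite leq_mul2r expnM leq_exp2r ?hB ?orbT //; lia.
rewrite -expnD leq_pexp2l //; exact: exp_arith.
Qed.

Lemma eps_arith n M : 1000 <= n -> M + 3 <= n -> (n + 2) * M <= 2 ^ n.
Proof. move=> h1 h2; have := sq_le_pow n; nia. Qed.

End PartA.
Import PartA.

Local Open Scope ring_scope.

Theorem theorem3 :
  exists c : nat, forall eps : rat, 0 < eps ->
    exists N : nat, forall n : nat, (N <= n)%N ->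
      exists S : {set 'M['F_2]_n},
        (forall A, A \in S -> ratio_at_most c A) /\
        1 - eps <= (#|S|%:R / #|{: 'M['F_2]_n}|%:R : rat).
Proof.
exists 72%N => eps eps0.
set M := Num.Def.archi_bound eps^-1.
have HM : eps^-1 < M%:R by apply: archi_boundP; rewrite invr_ge0 ltW.
exists (maxn 1000 (M + 3)) => n; rewrite geq_max => /andP [Hn1 HnM].
have [h1 h2 hLL hL] := L_facts Hn1.
move: h1 h2 hLL hL; set L := trunc_log 2 n => h1 h2 hLL hL.
set s := (n * n %/ (8 * L.+1))%N.
set Bd := [set mat_of (decode c) | c : Code n s].
exists (~: (Zset n :|: Bd)); split.
- move=> A; rewrite !inE negb_or => /andP [HZ HB].
  have Hne : forall i, rowset A i != set0.
    move=> i; apply: contra HZ => /eqP E; apply/existsP; exists i.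
    by rewrite -row_rowset E vecS0.
  have k0 : (0 < L %/ 2)%N by rewrite divn_gt0.
  have [C [c1 c2 c3]] := upper k0 Hne.
  exists C; split => // D HD.
  have HDs : (s < csize D)%N.
    rewrite ltnNge; apply/negP => Hs; have [c Hc] := small_image HD Hs.
    by move: HB; rewrite -Hc; case/negP; apply: imset_f.
  apply: leq_trans c3 _; apply: leq_trans (ltnW (upper_arith Hn1 h1 hL)) _.
  by rewrite leq_mul2l HDs orbT.
- set Q := (2 ^ (n * n))%N.
  have cM : #|{: 'M['F_2]_n}| = Q by rewrite card_mx card_F2.
  set X := #|Zset n :|: Bd|.
  have cS : (#|~: (Zset n :|: Bd)| = Q - X)%N.
    by rewrite -cM -(cardsC (Zset n :|: Bd)) addKn.
  have cU : (X <= #|Zset n| + #|Bd|)%N by rewrite /X cardsU leq_subr.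
  have cB : (#|Bd| <= #|{: Code n s}|)%N by apply: leq_imset_card.
  have cZ := card_Zset n.
  have cC := code_bound Hn1 h2 hL hLL; rewrite -/s -card_Code in cC.
  have e1 := eps_arith Hn1 HnM.
  have X1 : (X * 2 ^ n <= (n + 2) * Q)%N.
    apply: leq_trans (leq_mul cU (leqnn _)) _.
    rewrite mulnDl; move: cZ cC; rewrite -/Q => cZ cC.
    have := leq_mul cB (leqnn (2 ^ n)); nia.
  have X2 : (X * M <= Q)%N.
    have := leq_mul (leqnn X) e1; nia.
  have XQ : (X <= Q)%N.
    have M0 : (0 < M)%N.
      by rewrite lt0n; apply/eqP => M0; move: HM; rewrite M0 ltNge invr_ge0 ltW.
    by apply: leq_trans X2; rewrite leq_pmulr.
  have Q0 : (0 < Q)%N by rewrite expn_gt0.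
  rewrite cM cS ler_pdivlMr ?ltr0n // natrB //.
  have X2r : (X%:R * M%:R <= Q%:R :> rat) by rewrite -natrM ler_nat.
  have HM' : 1 < eps * M%:R.
    by have H := HM; rewrite -(ltr_pM2l eps0) mulfV ?lt0r_neq0 // in H.
  have X0 : 0 <= X%:R :> rat by [].
  nra.
Qed.
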